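(* Let $n=m=2$ and let $\sigma$ be the preference profile in which each of the two alternatives is ranked first by exactly one of the two voters. If $\mathcal{D}$ is the Beta$(\frac14,1)$ distribution (density $\frac14x^{-3/4}$ on $(0,1)$), then for each alternative $j\in\{1,2\}$, $\mathbb{E}\!\left[\frac{\max_{k\in\{1,2\}}\mathrm{sw}(k,u)}{\mathrm{sw}(j,u)}\right]=\infty$; i.e., no deterministic rule has finite expected inverse distortion at $\sigma$.
   Context: Given $\mathcal{D}$ and a profile $\sigma$ (a ranking of the alternatives for each voter), a random utility profile $u$ consistent with $\sigma$ is generated as follows: independently for each voter $i$, draw $m$ i.i.d. samples from $\mathcal{D}$ and assign them, from highest to lowest, to the alternatives in the order of voter $i$'s ranking. The social welfare of $j$ is $\mathrm{sw}(j,u)=\sum_i u_{ij}$; expectation is over $u$. *)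

(* Defs.v *)
From HB Require Import structures.
From mathcomp Require Import all_boot all_order all_algebra.
From mathcomp Require Import all_classical all_reals all_analysis.
Set Implicit Arguments. Unset Strict Implicit. Unset Printing Implicit Defensive.
Import Order.TTheory GRing.Theory Num.Theory Num.Def.
Local Open Scope ring_scope.

Definition beta14_pdf (R : realType) (x : R) : R :=
  if (0 < x) && (x < 1) then 4^-1 * x `^ (- (3 / 4)) else 0.

(* A sample point: w = ((x1, x2), (y1, y2)); voter 0 draws x1,x2, voter 1
   draws y1,y2 (m = 2 i.i.d. samples from D per voter). *)
Definition sample4 (R : realType) := ((R * R) * (R * R))%type.

Definition joint_pdf (R : realType) (w : sample4 R) : R :=
  beta14_pdf w.1.1 * beta14_pdf w.1.2 * beta14_pdf w.2.1 * beta14_pdf w.2.2.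

Definition sigma_top (i : 'I_2) : 'I_2 := i.

(* utility profile consistent with sigma: the larger of voter i's two samples
   goes to its top alternative, the smaller to the other one. *)
Definition util (R : realType) (w : sample4 R) (i j : 'I_2) : R :=
  let s := if i == ord0 then w.1 else w.2 in
  if j == sigma_top i then maxr s.1 s.2 else minr s.1 s.2.

Definition sw (R : realType) (j : 'I_2) (w : sample4 R) : R :=
  \sum_(i < 2) util w i j.

Definition inv_dist_ratio (R : realType) (j : 'I_2) (w : sample4 R) : R :=
  (\big[maxr/0]_(k < 2) sw k w) / sw j w.

Definition leb4 (R : realType) :=
  (((@lebesgue_measure R) \x (@lebesgue_measure R)) \x
   ((@lebesgue_measure R) \x (@lebesgue_measure R)))%E.

Definition expect4 (R : realType) (f : sample4 R -> R) : \bar R :=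
  (\int[@leb4 R]_w (f w * joint_pdf w)%:E)%E.

(* Main.v *)
Require Import Defs.
From HB Require Import structures.
From mathcomp Require Import all_boot all_order all_algebra.
From mathcomp Require Import all_classical all_reals all_analysis.
From mathcomp Require Import ring lra.
Import Order.TTheory GRing.Theory Num.Theory Num.Def.
Local Open Scope ring_scope.
Set Implicit Arguments. Unset Strict Implicit.
Local Open Scope classical_set_scope.

Section SF. Local Open Scope ereal_scope. Context d1 d2 (T1 : measurableType d1) (T2 : measurableType d2) (R : realType).
Variable m1 : {sigma_finite_measure set T1 -> \bar R}.
Variable m2 : {sigma_finite_measure set T2 -> \bar R}.
Lemma my_pm_sigma_finite : sigma_finite setT (m1 \x m2)%E.
Proof.
have /sigma_finiteP[F [TF ndF Foo]] := sigma_finiteT m1.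
have /sigma_finiteP[G [TG ndG Goo]] := sigma_finiteT m2.
exists (fun n => F n `*` G n).
 rewrite -setXTT TF TG predeqE => -[x y]; split.
    move=> [/= [n _ Fnx] [k _ Gky]]; exists (maxn n k) => //; split.
    - by move: x Fnx; exact/subsetPset/ndF/leq_maxl.
    - by move: y Gky; exact/subsetPset/ndG/leq_maxr.
  by move=> [n _ []/= ? ?]; split; exists n.
move=> k; have [? ?] := Foo k; have [? ?] := Goo k.
split; first exact: measurableX.
by rewrite product_measure1E// lte_mul_pinfty// ge0_fin_numE.
Qed.
End SF.
Definition LL (R : realType) := ((@lebesgue_measure R) \x (@lebesgue_measure R))%E.
HB.instance Definition _ (R : realType) := Measure.copy (@LL R) ((@lebesgue_measure R) \x (@lebesgue_measure R))%E.
HB.instance Definition _ (R : realType) := Measure_isSigmaFinite.Build _ _ _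
  (@LL R) (@my_pm_sigma_finite _ _ _ _ R (@lebesgue_measure R) (@lebesgue_measure R)).


Section P.
Variable R : realType.

Lemma pdf_ge0 (x : R) : 0 <= beta14_pdf x.
Proof. by rewrite /beta14_pdf; case: ifP => _ //; rewrite mulr_ge0 ?powR_ge0. Qed.

Lemma pdf_small (t x : R) : 0 < t -> t < 1 -> 0 < x -> x < t ^+ 4 ->
  4^-1 * (t ^+ 3)^-1 <= beta14_pdf x.
Proof.
move=> t0 t1 x0 xt.
have t41 : t ^+ 4 < 1 by rewrite expr_lt1 // ltW.
rewrite /beta14_pdf x0 (lt_trans xt t41) /= powRN.
rewrite ler_pM2l ?invr_gt0 // lef_pV2 ?posrE ?exprn_gt0 ?powR_gt0 //.
have -> : t ^+ 3 = (t ^+ 4) `^ (3 / 4).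
  rewrite -(powR_mulrn 4 (ltW t0)) -powRrM.
  have -> : (4%:R * (3 / 4) : R) = 3%:R by field.
  by rewrite powR_mulrn // ltW.
by apply: ge0_ler_powR; rewrite ?nnegrE ?divr_ge0 ?(ltW x0) ?exprn_ge0 ?(ltW t0) ?ltW.
Qed.

Lemma pdf_big (x : R) : 2^-1 < x -> x < 1 -> 4^-1 <= beta14_pdf x.
Proof.
move=> x2 x1.
have x0 : 0 < x by apply: lt_trans x2; rewrite invr_gt0.
rewrite /beta14_pdf x0 x1 /= powRN.
rewrite -[X in X <= _]mulr1 ler_pM2l ?invr_gt0 // invf_ge1 ?powR_gt0 //.
apply: (@le_trans _ _ (1 `^ (3/4))); last by rewrite powR1.
by apply: ge0_ler_powR; rewrite ?nnegrE ?divr_ge0 ?(ltW x0) ?ltW.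
Qed.

Lemma sw0E (w : sample4 R) : sw ord0 w = maxr w.1.1 w.1.2 + minr w.2.1 w.2.2.
Proof. by rewrite /sw !big_ord_recl big_ord0 /util /= addr0. Qed.

Lemma sw1E (w : sample4 R) : sw (@Ordinal 2 1 isT) w = minr w.1.1 w.1.2 + maxr w.2.1 w.2.2.
Proof. by rewrite /sw !big_ord_recl big_ord0 /util /= addr0. Qed.

Lemma bigmaxE (w : sample4 R) :
  \big[maxr/0]_(k < 2) sw k w = maxr (sw ord0 w) (maxr (sw (@Ordinal 2 1 isT) w) 0).
Proof. by rewrite !big_ord_recl big_ord0. Qed.

Lemma pdf_nonpos (x : R) : ~~ (0 < x) -> beta14_pdf x = 0.
Proof. by rewrite /beta14_pdf => /negbTE ->. Qed.

Lemma ord2_cases (j : 'I_2) : j = ord0 \/ j = (@Ordinal 2 1 isT).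
Proof. by case: j => -[|[|//]] ? ; [left|right]; apply: val_inj. Qed.

Lemma integrand_ge0 (j : 'I_2) (w : sample4 R) :
  0 <= inv_dist_ratio j w * joint_pdf w.
Proof.
have pj : 0 <= joint_pdf w by rewrite /joint_pdf !mulr_ge0 // pdf_ge0.
case: w => [[x1 x2] [y1 y2]] in pj *.
have [h|h] := boolP [&& 0 < x1, 0 < x2, 0 < y1 & 0 < y2].
  case/and4P: h => h1 h2 h3 h4; apply: mulr_ge0 => //.
  rewrite /inv_dist_ratio bigmaxE; apply: divr_ge0.
    by rewrite !le_max lexx !orbT.
  have s0 : 0 <= sw ord0 ((x1, x2), (y1, y2)).
    by rewrite sw0E /= addr_ge0 // ?le_max ?le_min ?ltW.
  have s1 : 0 <= sw (@Ordinal 2 1 isT) ((x1, x2), (y1, y2)).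
    by rewrite sw1E /= addr_ge0 // ?le_max ?le_min ?ltW.
  by case: (ord2_cases j) => ->.
rewrite /joint_pdf /=.
move: h; rewrite !negb_and => /or4P [] /pdf_nonpos ->.
all: by rewrite ?mulr0 ?mul0r ?mulr0 ?mul0r ?mulr0.
Qed.

Lemma ratio_lb (sj so bm e : R) : 0 < sj -> sj < 2 * e -> 2^-1 < so ->
  so <= bm -> (4 * e)^-1 <= bm / sj.
Proof.
move=> sj0 sje so2 sob.
have e0 : 0 < e by lra.
rewrite ler_pdivlMr //.
set u := (4 * e)^-1.
have hu : u * (4 * e) = 1 by rewrite mulVf // gt_eqF // mulr_gt0.
have u0 : 0 < u by rewrite invr_gt0 mulr_gt0.
nra.
Qed.

Definition kk (t : R) : R :=
  (4 * t ^+ 4)^-1 * ((4^-1 * (t ^+ 3)^-1) * (4^-1 * (t ^+ 3)^-1) *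
                     (4^-1 * (t ^+ 3)^-1) * 4^-1).

Lemma bound0 (t x1 x2 y1 y2 : R) : 0 < t -> t < 1 ->
  0 < x1 < t ^+ 4 -> 0 < x2 < t ^+ 4 -> 0 < y1 < t ^+ 4 -> 2^-1 < y2 < 1 ->
  kk t <= inv_dist_ratio ord0 ((x1, x2), (y1, y2)) * joint_pdf ((x1, x2), (y1, y2)).
Proof.
move=> t0 t1 /andP[a1 b1] /andP[a2 b2] /andP[a3 b3] /andP[a4 b4].
have a40 : 0 < 4^-1 * (t ^+ 3)^-1 :> R by rewrite mulr_gt0 ?invr_gt0 ?exprn_gt0.
apply: ler_pM.
- by rewrite invr_ge0 mulr_ge0 ?exprn_ge0 ?ltW.
- by apply: ltW; rewrite !mulr_gt0 // ?invr_gt0 ?exprn_gt0.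
- rewrite /inv_dist_ratio bigmaxE sw0E sw1E /=.
  apply: (@ratio_lb _ (minr x1 x2 + maxr y1 y2)).
  + have : 0 < maxr x1 x2 by rewrite lt_max a1.
    have : 0 < minr y1 y2 by rewrite lt_min a3 (lt_trans _ a4) // invr_gt0.
    lra.
  + have : maxr x1 x2 < t ^+ 4 by rewrite gt_max b1 b2.
    have : minr y1 y2 <= y1 by rewrite ge_min lexx.
    lra.
  + have : 0 < minr x1 x2 by rewrite lt_min a1 a2.
    have : y2 <= maxr y1 y2 by rewrite le_max lexx orbT.
    lra.
  + by rewrite !le_max lexx !orbT.
- rewrite /joint_pdf /=.
  apply: ler_pM; rewrite ?(ltW a40) ?invr_ge0 ?pdf_big //.
    by rewrite !mulr_ge0 ?invr_ge0 ?exprn_ge0 ?(ltW t0).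
  apply: ler_pM; rewrite ?(ltW a40) ?pdf_small //.
    by rewrite !mulr_ge0 ?invr_ge0 ?exprn_ge0 ?(ltW t0).
  by apply: ler_pM; rewrite ?(ltW a40) ?pdf_small.
Qed.

Lemma bound1 (t x1 x2 y1 y2 : R) : 0 < t -> t < 1 ->
  2^-1 < x1 < 1 -> 0 < x2 < t ^+ 4 -> 0 < y1 < t ^+ 4 -> 0 < y2 < t ^+ 4 ->
  kk t <= inv_dist_ratio (@Ordinal 2 1 isT) ((x1, x2), (y1, y2)) * joint_pdf ((x1, x2), (y1, y2)).
Proof.
move=> t0 t1 /andP[a1 b1] /andP[a2 b2] /andP[a3 b3] /andP[a4 b4].
have a40 : 0 < 4^-1 * (t ^+ 3)^-1 :> R by rewrite mulr_gt0 ?invr_gt0 ?exprn_gt0.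
have -> : joint_pdf ((x1, x2), (y1, y2)) =
   beta14_pdf x2 * beta14_pdf y1 * beta14_pdf y2 * beta14_pdf x1.
  by rewrite /joint_pdf /=; ring.
apply: ler_pM.
- by rewrite invr_ge0 mulr_ge0 ?exprn_ge0 ?ltW.
- by apply: ltW; rewrite !mulr_gt0 // ?invr_gt0 ?exprn_gt0.
- rewrite /inv_dist_ratio bigmaxE sw0E sw1E /=.
  apply: (@ratio_lb _ (maxr x1 x2 + minr y1 y2)).
  + have : 0 < maxr y1 y2 by rewrite lt_max a3.
    have : 0 < minr x1 x2 by rewrite lt_min a2 (lt_trans _ a1) // invr_gt0.
    lra.
  + have : maxr y1 y2 < t ^+ 4 by rewrite gt_max b3 b4.
    have : minr x1 x2 <= x2 by rewrite ge_min lexx orbT.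
    lra.
  + have : 0 < minr y1 y2 by rewrite lt_min a3 a4.
    have : x1 <= maxr x1 x2 by rewrite le_max lexx.
    lra.
  + by rewrite le_max lexx.
- apply: ler_pM; rewrite ?(ltW a40) ?invr_ge0 ?pdf_big //.
    by rewrite !mulr_ge0 ?invr_ge0 ?exprn_ge0 ?(ltW t0).
  apply: ler_pM; rewrite ?(ltW a40) ?pdf_small //.
    by rewrite !mulr_ge0 ?invr_ge0 ?exprn_ge0 ?(ltW t0).
  by apply: ler_pM; rewrite ?(ltW a40) ?pdf_small.
Qed.


Import HBNNSimple.

Definition T4 := ((measurableTypeR R * measurableTypeR R) * (measurableTypeR R * measurableTypeR R))%type.

Lemma lb (g : T4 -> R) (g0 : forall w, 0 <= g w)
  (B : set T4) (mB : measurable B) (k : R) (k0 : 0 <= k)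
  (hk : forall w, B w -> k <= g w) :
  (k%:E * (@LL R \x @LL R) B <= \int[(@LL R \x @LL R)%E]_w (g w)%:E)%E.
Proof.
rewrite ge0_integralTE; last by move=> w; rewrite lee_fin.
apply: ereal_sup_ubound => /=.
exists (scale_nnsfun (indic_nnsfun R mB) k0).
  move=> w /=; rewrite lee_fin /= measurable_realfun.mindicE.
  by case: (boolP (w \in B)) => [/set_mem/hk|_]; rewrite ?mulr1 ?mulr0.
rewrite /scale_nnsfun.
apply: etrans (sintegralrM _ k (indic_nnsfun R mB)) _.
congr (_ * _)%E; exact: sintegral_indic.
Qed.

Lemma box_mble (A1 A2 A3 A4 : interval R) :
  measurable ((([set` A1] `*` [set` A2]) `*` ([set` A3] `*` [set` A4])) : set T4).
Proof.
have mi (A : interval R) : measurable ([set` A] : set (measurableTypeR R)).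
  exact: measurable_itv.
exact: (measurableX (measurableX (mi A1) (mi A2)) (measurableX (mi A3) (mi A4))).
Qed.

Lemma box_measure (A1 A2 A3 A4 : interval R) :
  (@LL R \x @LL R)%E (([set` A1] `*` [set` A2]) `*` ([set` A3] `*` [set` A4])) =
  ((lebesgue_measure [set` A1] * lebesgue_measure [set` A2]) *
  (lebesgue_measure [set` A3] * lebesgue_measure [set` A4]))%E.
Proof.
have mi (A : interval R) : measurable ([set` A] : set (measurableTypeR R)).
  exact: measurable_itv.
apply: etrans (@product_measure1E _ _ _ _ R (@LL R) (@LL R) _ _
   (measurableX (mi A1) (mi A2)) (measurableX (mi A3) (mi A4))) _.
rewrite /LL.
congr (_ * _)%E.
  exact: (@product_measure1E _ _ _ _ R (@lebesgue_measure R) (@lebesgue_measure R) _ _ (mi A1) (mi A2)).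
exact: (@product_measure1E _ _ _ _ R (@lebesgue_measure R) (@lebesgue_measure R) _ _ (mi A3) (mi A4)).
Qed.
End P.

Lemma kk_ge0 (R : realType) (t : R) : 0 < t -> 0 <= kk t.
Proof. by move=> t0; apply: ltW; rewrite /kk !mulr_gt0 // ?invr_gt0 ?mulr_gt0 ?exprn_gt0. Qed.

Lemma final_arith (R : realType) (M t : R) :
  t = (2048 * (`|M| + 1))^-1 ->
  M <= kk t * ((t ^+ 4 - 0) * (t ^+ 4 - 0) * ((t ^+ 4 - 0) * (1 - 2^-1))).
Proof.
move=> ht.
have hM : 0 <= `|M| by [].
have h1 : 0 < 2048 * (`|M| + 1) by lra.
have t0 : t != 0 by rewrite ht invr_eq0 gt_eqF.
have -> : kk t * ((t ^+ 4 - 0) * (t ^+ 4 - 0) * ((t ^+ 4 - 0) * (1 - 2^-1))) = (2048 * t)^-1.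
  by rewrite /kk; field.
have hM1 : `|M| + 1 != 0 by rewrite gt_eqF //; lra.
have -> : (2048 * t)^-1 = `|M| + 1 by rewrite ht; field.
have := ler_norm M; lra.
Qed.

Theorem lemma2 (R : realType) (j : 'I_2) :
  expect4 (@inv_dist_ratio R j) = +oo%E.
Proof.
apply: eq_infty => M.
pose t : R := (2048 * (`|M| + 1))^-1.
have hM : 0 <= `|M| by [].
have hpos : 0 < 2048 * (`|M| + 1) by lra.
have t0 : 0 < t by rewrite invr_gt0.
have t1 : t < 1 by rewrite /t invf_lt1 //; lra.
have e0 : 0 < t ^+ 4 by rewrite exprn_gt0.
have h2 : (2^-1 : R) < 1 by rewrite invf_lt1; lra.
have E : expect4 (@inv_dist_ratio R j) =
   (\int[(@LL R \x @LL R)%E]_w ((inv_dist_ratio j w * joint_pdf w)%:E))%E by [].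
rewrite E.
case: (ord2_cases j) => ->.
- have mB := box_mble (Interval (BRight 0) (BLeft (t^+4))) (Interval (BRight 0) (BLeft (t^+4))) (Interval (BRight 0) (BLeft (t^+4))) (Interval (BRight 2^-1) (BLeft 1)).
  apply: le_trans (lb (g := fun w => inv_dist_ratio ord0 w * joint_pdf w)
     (@integrand_ge0 R ord0) mB (kk_ge0 t0) _).
    rewrite box_measure !lebesgue_measure_itv /= !lte_fin e0 h2 /=.
    rewrite -!EFinB -!EFinM lee_fin.
    exact: (@final_arith R M t erefl).
  move=> [[x1 x2] [y1 y2]] /= [[h1 h3] [h5 h7]].
  move: h1 h3 h5 h7; rewrite /= !in_itv /= => h1 h3 h5 h7.
  exact: bound0.
- have mB := box_mble (Interval (BRight 2^-1) (BLeft 1)) (Interval (BRight 0) (BLeft (t^+4))) (Interval (BRight 0) (BLeft (t^+4))) (Interval (BRight 0) (BLeft (t^+4))).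
  apply: le_trans (lb (g := fun w => inv_dist_ratio (@Ordinal 2 1 isT) w * joint_pdf w)
     (@integrand_ge0 R _) mB (kk_ge0 t0) _).
    rewrite box_measure !lebesgue_measure_itv /= !lte_fin e0 h2 /=.
    rewrite -!EFinB -!EFinM lee_fin.
    have h := @final_arith R M t erefl.
    apply: le_trans h _; rewrite le_eqVlt; apply/orP; left; apply/eqP; ring.
  move=> [[x1 x2] [y1 y2]] /= [[h1 h3] [h5 h7]].
  move: h1 h3 h5 h7; rewrite /= !in_itv /= => h1 h3 h5 h7.
  exact: bound1.
Qed.
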